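(* Let $G$ be a finite graph with filtration function $f$. Then the forward persistence diagrams and the backward persistence diagrams of $(G,f)$ (in every homological degree) are determined by the FB-persistence diagrams of $(G,f)$. Moreover, FB-persistence is strictly more expressive than forward and backward persistence combined: there exist graphs $G, H$ and a permutation equivariant filtration (assigning filtration functions $f_G, f_H$) such that the forward persistence diagrams of $(G,f_G)$ and $(H,f_H)$ coincide in all degrees, the backward persistence diagrams coincide in all degrees, but the FB-persistence diagrams differ.
   Context: Graphs are finite, undirected, possibly with self-loops and multi-edges, and are regarded as topological spaces (1-dimensional cell complexes). A filtration function on $G=(V,E)$ is $f: V\cup E\to\mathbb{R}$ with $f(v)\le f(e)$ and $f(w)\le f(e)$ for every edge $e$ with endpoints $v,w$. If $a_0<\dots<a_n$ are the distinct values of $f$, put $G_{-1}=\emptyset$ and $G_i=f^{-1}((-\infty,a_i])$, a subgraph; so $\emptyset=G_{-1}\subset G_0\subset\dots\subset G_n=G$. The $i$-th intermediate complex $\mathrm{IC}_i(G,f)$ is the subgraph consisting of the vertices and edges in $G_i\setminus G_{i-1}$ together with all endpoints of those edges. For a sequence of spaces and continuous maps $X_0\to X_1\to\dots\to X_N$, applying $H_k(-;\mathbb{Z}/2)$ gives a persistence module; its $k$-th persistence diagram is the multiset of intervals $(b,d)$ ($d=\infty$ allowed) of its interval decomposition, with $b,d$ recorded as positions in the sequence; a leading $\emptyset$ term is discarded. Forward persistence of $(G,f)$: the diagrams of $G_0\subset G_1\subset\dots\subset G_n$ (inclusions). Backward persistence: the diagrams of the sequence of quotient maps $G\to Z_1:=G/\mathrm{IC}_n(G)\to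 Z_2:=Z_1/( *_1\cup \mathrm{IC}_{n-1}(G))\to\dots\to Z_{n+1}=\text{point}$, where $*_j$ denotes the point to which everything contracted so far has been collapsed (contracting $\mathrm{IC}_n,\mathrm{IC}_{n-1},\dots,\mathrm{IC}_0$ in turn). FB-persistence: the diagrams of the concatenated sequence $G_0\subset\dots\subset G_n=G\to Z_1\to\dots\to Z_{n+1}$. A permutation equivariant filtration is a rule assigning to each graph $G$ (possibly with vertex colors) a filtration function $f_G$ depending only on intrinsic features, i.e. $f_H\circ\varphi=f_G$ for every (color-preserving) isomorphism $\varphi:G\to H$; e.g. the degree filtration $f(v)=\deg v$, $f(e)=\max(f(v),f(w))$. *)

(* Defs.v *)
From HB Require Import structures.
From mathcomp Require Import all_boot all_order all_algebra.
From mathcomp Require Import reals.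
Set Implicit Arguments. Unset Strict Implicit. Unset Printing Implicit Defensive.
Import Order.TTheory GRing.Theory Num.Theory.
Local Open Scope ring_scope.

(* Finite undirected multigraphs (self-loops, multi-edges allowed).   *)
(* endpoints carries no meaning (isomorphisms may swap them).         *)
Record graph := Graph {
  gV : finType;
  gE : finType;
  gsrc : gE -> gV;
  gtgt : gE -> gV }.

Record filtration (R : realType) (g : graph) := Filtration {
  fv : gV g -> R;
  fe : gE g -> R;
  f_mono : forall e, fv (gsrc e) <= fe e /\ fv (gtgt e) <= fe e }.

Section Filt.
Variables (R : realType) (g : graph) (f : filtration R g).
Local Notation V := (gV g).
Local Notation E := (gE g).

Definition fvals : seq R :=
  sort <=%O (undup ([seq fv f v | v <- enum V] ++ [seq fe f e | e <- enum E])).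
(* number of distinct values = n + 1 *)
Definition nlev : nat := size fvals.
Definition lev (i : nat) : R := nth 0 fvals i.

(* A "subquotient" S/A of G : a subgraph S together with a subgraph A of S
   that is collapsed to a single point (A empty = no collapse). *)
Record sq := SQ { sqSV : {set V}; sqSE : {set E}; sqAV : {set V}; sqAE : {set E} }.

Definition Gsub (i : nat) : sq :=
  SQ [set v | fv f v <= lev i] [set e | fe f e <= lev i] set0 set0.

Definition ICE (i : nat) : {set E} := [set e | fe f e == lev i].
Definition ICV (i : nat) : {set V} :=
  [set v | fv f v == lev i] :|: ((@gsrc g) @: ICE i) :|: ((@gtgt g) @: ICE i).

(* Z_j = G / (IC_n ∪ ... ∪ IC_{n-j+1}), the union collapsed to one point
   (this is the space obtained by successively contracting
    IC_n, *_1 ∪ IC_{n-1}, ..., *_{j-1} ∪ IC_{n-j+1}). *)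
Definition Zq (j : nat) : sq :=
  SQ setT setT (\bigcup_(nlev - j <= i < nlev) ICV i)
               (\bigcup_(nlev - j <= i < nlev) ICE i).

Definition fwd_seq (p : nat) : sq := Gsub p.
(* backward: G -> Z_1 -> ... -> Z_{n+1}   (positions 0..n+1) *)
Definition bwd_seq (p : nat) : sq := Zq p.  (* Zq 0 = G *)
(* FB: G_0 -> ... -> G_n = G -> Z_1 -> ... -> Z_{n+1} (positions 0..2n+1) *)
Definition fb_seq (p : nat) : sq :=
  if (p < nlev)%N then Gsub p else Zq (p - nlev).+1.

(* 0-chains live in {ffun option V -> F_2} (None = the collapse point),*)
Local Notation K := 'F_2.
Definition CV := {ffun option V -> K^o}.
Definition CE := {ffun E -> K^o}.
Definition dV (x : option V) : CV := [ffun y => (y == x)%:R].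
Definition dE (e : E) : CE := [ffun y => (y == e)%:R].

Definition qv (A : {set V}) (v : V) : CV :=
  if v \in A then dV None else dV (Some v).

Definition C0 (X : sq) : {vspace CV} :=
  let gens := [seq dV (Some v) | v in (sqSV X :\: sqAV X)%SET] in
  (<<gens>> + (if sqAV X != set0 then <[dV None]> else 0))%VS.
Definition C1 (X : sq) : {vspace CE} :=
  let gens := [seq dE e | e in (sqSE X :\: sqAE X)%SET] in
  <<gens>>%VS.

Definition bd (A : {set V}) : 'Hom(CE, CV) :=
  linfun (fun c : CE => \sum_(e : E) c e *: (qv A (gsrc e) + qv A (gtgt e))).

Definition Z1 (X : sq) : {vspace CE} := (C1 X :&: lker (bd (sqAV X)))%VS.
Definition B0 (X : sq) : {vspace CV} := (bd (sqAV X) @: C1 X)%VS.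

(* chain map induced by the canonical continuous map S/A -> S'/A'
   (S ⊆ S', A ⊆ A'), i.e. inclusion followed by collapse of A' *)
Definition phi0 (Y : sq) : 'Hom(CV, CV) :=
  linfun (fun c : CV => \sum_(x : option V)
    c x *: (match x with None => dV None | Some v => qv (sqAV Y) v end)).
Definition phi1 (Y : sq) : 'Hom(CE, CE) :=
  linfun (fun c : CE => [ffun e => if e \in sqAE Y then 0 else c e]).

(* rank of the induced map H_k(X; Z/2) -> H_k(Y; Z/2)
   = dim ((phi(Z_k X) + B_k Y) / B_k Y); graphs have no 2-cells. *)
Definition hrank (k : nat) (X Y : sq) : nat :=
  match k with
  | 0 => (\dim (phi0 Y @: C0 X + B0 Y)%VS - \dim (B0 Y))%N
  | 1 => \dim (phi1 Y @: Z1 X)%VS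
  | _ => 0%N
  end.

End Filt.

(* A diagram is a multiplicity function on intervals (b, d), where b  *)
(* is the birth position and d = Some d' a (finite) death position    *)
(* (the class is alive at positions b..d'-1) or d = None (d = oo).    *)
(* For a persistence module indexed by 0..N with ranks r i j of the   *)
(* structure maps M_i -> M_j (i <= j), the interval multiplicities of *)
(* the interval decomposition are given by the rank inclusion–        *)
(* exclusion formula below.                                           *)
Definition diagram := nat -> option nat -> int.

Definition dgm_of_ranks (N : nat) (r : nat -> nat -> nat) : diagram :=
  fun b d =>
    let r' (i j : nat) : int := if i == 0%N then 0 else (r i.-1 j)%:Z in
    (* r' (i+1) j = r i j;  r' 0 j = 0  (rank "from position -1") *)
    match d with
    | None => if (b <= N)%N then (r b N)%:Z - r' b N else 0
    | Some d' =>
        if (b < d' <= N)%N then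
          (r b d'.-1)%:Z - r' b d'.-1 - (r b d')%:Z + r' b d'
        else 0
    end.

Definition pdgm (g : graph) (X : nat -> sq g) (N : nat) (k : nat) : diagram :=
  dgm_of_ranks N (fun i j => hrank k (X i) (X j)).

Definition fwd_dgm (R : realType) (g : graph) (f : filtration R g) (k : nat)
  : diagram := pdgm (fwd_seq f) (nlev f).-1 k.
Definition bwd_dgm (R : realType) (g : graph) (f : filtration R g) (k : nat)
  : diagram := pdgm (bwd_seq f) (nlev f) k.
Definition fb_dgm (R : realType) (g : graph) (f : filtration R g) (k : nat)
  : diagram := pdgm (fb_seq f) (nlev f + nlev f).-1 k.

Definition coloring (g : graph) := gV g -> nat.

Definition is_iso (g h : graph) (cg : coloring g) (ch : coloring h)
    (pV : gV g -> gV h) (pE : gE g -> gE h) : Prop :=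
  bijective pV /\ bijective pE /\
  (forall v, ch (pV v) = cg v) /\
  (forall e, (gsrc (pE e) = pV (gsrc e) /\ gtgt (pE e) = pV (gtgt e)) \/
             (gsrc (pE e) = pV (gtgt e) /\ gtgt (pE e) = pV (gsrc e))).

Definition filt_rule (R : realType) :=
  forall (g : graph) (c : coloring g), filtration R g.

Definition perm_equivariant (R : realType) (F : filt_rule R) : Prop :=
  forall (g h : graph) (cg : coloring g) (ch : coloring h) pV pE,
    is_iso cg ch pV pE ->
    (forall v, fv (F h ch) (pV v) = fv (F g cg) v) /\
    (forall e, fe (F h ch) (pE e) = fe (F g cg) e).

(* Main.v *)
Require Import Defs.
From mathcomp Require Import all_boot all_order all_algebra.
From mathcomp Require Import reals.
From HB Require Import structures.
From mathcomp Require Import zify.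
From Stdlib Require Import FunctionalExtensionality.
Set Implicit Arguments. Unset Strict Implicit. Unset Printing Implicit Defensive.
Import Order.TTheory GRing.Theory Num.Theory.
Local Open Scope ring_scope.

Lemma F2_cases (k : 'F_2) : k = 0 \/ k = 1.
Proof. case: k => [[|[|//]]] /= Hk; [left|right]; exact: val_inj. Qed.

Lemma F2_add11 : (1 + 1 : 'F_2) = 0.
Proof. exact: val_inj. Qed.

Section Model.
Variable T : finType.
Variable Tl : seq T.
Hypothesis Tl_all : forall x, x \in Tl.
Local Notation K := 'F_2.
Local Notation vT := {ffun T -> K^o}.

Definition mv (b : T -> bool) : vT := [ffun x => (b x)%:R].
Definition bx (b w : T -> bool) : T -> bool := fun x => b x (+) w x.
Definition allz (b : T -> bool) : bool := all (fun x => ~~ b x) Tl.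

Lemma mvD b w : mv (bx b w) = mv b + mv w.
Proof.
apply/ffunP => x; rewrite !ffunE /bx.
by case: (b x); case: (w x) => //=; rewrite ?addr0 ?add0r // F2_add11.
Qed.

Lemma oppv (v : vT) : - v = v.
Proof.
apply/ffunP => x; rewrite !ffunE.
by case: (F2_cases (v x)) => ->; rewrite ?oppr0 //; apply: val_inj.
Qed.

Lemma addvv (v : vT) : v + v = 0.
Proof. by rewrite -{1}(oppv v) addNr. Qed.

Lemma mv_eq0 b : (mv b == 0) = allz b.
Proof.
apply/eqP/allP => [H x _|H].
  have := congr1 (fun f : vT => f x) H; rewrite !ffunE.
  by case: (b x) => //= /eqP; rewrite oner_eq0.
by apply/ffunP => x; rewrite !ffunE; move: (H x (Tl_all x)); case: (b x).
Qed.

Fixpoint insp (b : T -> bool) (s : seq (T -> bool)) : bool :=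
  match s with
  | [::] => allz b
  | w :: s' => insp b s' || insp (bx b w) s'
  end.

Lemma inspP s b : (mv b \in <<map mv s>>%VS) = insp b s.
Proof.
elim: s b => [|w s IH] b /=; first by rewrite span_nil memv0 mv_eq0.
rewrite span_cons -!IH; apply/memv_addP/orP => [[u /vlineP [k ->] [v Hv Hb]]|[H|H]].
- case: (F2_cases k) => Hk; subst k.
    by left; rewrite Hb scale0r add0r.
  by right; rewrite mvD Hb scale1r addrAC addvv add0r.
- by exists 0; [exact: mem0v | exists (mv b) => //; rewrite add0r].
- exists (mv w); first exact: memv_line.
  by exists (mv (bx b w)) => //; rewrite mvD addrCA addvv addr0.
Qed.

Fixpoint rk (s : seq (T -> bool)) : nat :=
  match s with
  | [::] => 0%N
  | w :: s' => (rk s' + ~~ insp w s')%N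
  end.

Lemma rkP s : \dim <<map mv s>> = rk s.
Proof.
elim: s => [|w s IH] /=; first by rewrite span_nil dimv0.
rewrite span_cons; case Hin: (insp w s) => /=; rewrite -inspP in Hin.
  rewrite addn0 -IH; congr (\dim _); apply/addv_idPr.
  by rewrite -memvE; exact: Hin.
have Hw : mv w != 0.
  apply/negP => /eqP H0; move: Hin; rewrite H0 mem0v; discriminate.
rewrite dimv_disjoint_sum; first by rewrite IH dim_vline Hw addnC.
apply/eqP; rewrite -subv0; apply/subvP => x /memv_capP [/vlineP [k ->] Hx].
case: (F2_cases k) => Hk; subst k; first by rewrite scale0r mem0v.
by move: Hx; rewrite scale1r Hin.
Qed.

End Model.
Arguments mv {T}.
Arguments bx {T}.
Arguments rk {T}.
Arguments insp {T}.
Arguments allz {T}.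

Section Delta.
Variable T : finType.
Local Notation K := 'F_2.
Definition pt (x : T) : T -> bool := fun y => y == x.

Lemma span_deltaP (l : seq T) (c : {ffun T -> K^o}) :
  reflect (forall x, x \notin l -> c x = 0) (c \in <<map mv (map pt l)>>%VS).
Proof.
elim: l c => [|a l IH] c /=.
  rewrite span_nil memv0; apply: (iffP eqP) => [-> x _|H]; first by rewrite ffunE.
  by apply/ffunP => x; rewrite ffunE H.
rewrite span_cons; apply: (iffP memv_addP) => [[u /vlineP [k ->] [v /IH Hv ->]] x|H].
  rewrite inE negb_or => /andP [Hxa Hxl].
  by rewrite !ffunE Hv // /pt (negbTE Hxa) /= scaler0 add0r.
exists (c a *: mv (pt a)); first by apply/vlineP; exists (c a).
exists (c - c a *: mv (pt a)); last by rewrite addrC subrK.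
apply/IH => x Hx; rewrite !ffunE /pt.
case: (eqVneq x a) => [->|Hxa].
  by rewrite /=; change (c a - c a * 1 = 0); rewrite mulr1 subrr.
by rewrite /= scaler0 subr0 H // inE negb_or Hxa.
Qed.
End Delta.
Arguments pt {T}.

Section GraphModel.
Variable g : graph.
Local Notation V := (gV g).
Local Notation E := (gE g).
Local Notation K := 'F_2.
Variables (Vl : seq V) (El : seq E).
Hypotheses (Vl_all : forall v, v \in Vl) (El_all : forall e, e \in El).

Definition Tl0 : seq (option V) := None :: map Some Vl.
Lemma Tl0_all x : x \in Tl0.
Proof. by case: x => [v|]; rewrite inE ?mem_map ?Vl_all ?orbT //; apply: Some_inj. Qed.

Record msq := MSQ { mSV : V -> bool; mSE : E -> bool; mAV : V -> bool; mAE : E -> bool }.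
Definition srel (X : sq g) (m : msq) : Prop :=
  [/\ forall v, (v \in sqSV X) = mSV m v, forall e, (e \in sqSE X) = mSE m e,
      forall v, (v \in sqAV X) = mAV m v & forall e, (e \in sqAE X) = mAE m e].

Definition pts0 (m : msq) : seq (option V) :=
  [seq Some v | v <- Vl & mSV m v && ~~ mAV m v] ++
  (if has (mAV m) Vl then [:: None] else [::]).
Definition el1 (m : msq) : seq E := [seq e <- El | mSE m e && ~~ mAE m e].
Definition qvm (Av : V -> bool) (v : V) : option V := if Av v then None else Some v.
Definition bdm (Av : V -> bool) (e : E) : option V -> bool :=
  bx (pt (qvm Av (gsrc e))) (pt (qvm Av (gtgt e))).
Definition ph0 (Av : V -> bool) (x : option V) : option V :=
  match x with None => None | Some v => qvm Av v end.

Definition hr0 (mX mY : msq) : nat :=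
  (rk Tl0 ([seq pt (ph0 (mAV mY) x) | x <- pts0 mX] ++ map (bdm (mAV mY)) (el1 mY))
   - rk Tl0 (map (bdm (mAV mY)) (el1 mY)))%N.
Definition hr1 (mX mY : msq) : nat :=
  let l := el1 mX in let l' := [seq e <- l | mAE mY e] in
  ((rk El (map pt l) - rk Tl0 (map (bdm (mAV mX)) l))
   - (rk El (map pt l') - rk Tl0 (map (bdm (mAV mX)) l')))%N.
Definition hcomp (k : nat) (mX mY : msq) : nat :=
  match k with 0 => hr0 mX mY | 1 => hr1 mX mY | _ => 0%N end.

Definition bdf (A : {set V}) (c : CE g) : CV g :=
  \sum_(e : E) c e *: (qv A (gsrc e) + qv A (gtgt e)).
Lemma bdf_lin A : linear (bdf A).
Proof.
move=> a x y; rewrite /bdf scaler_sumr -big_split /=; apply: eq_bigr => e _.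
by rewrite !ffunE scalerDl scalerA.
Qed.
HB.instance Definition _ A := GRing.isLinear.Build _ _ _ _ (bdf A) (bdf_lin A).
Lemma bdE A c : bd A c = bdf A c.
Proof. exact: (lfunE (bdf A)). Qed.

Definition phi0f (Y : sq g) (c : CV g) : CV g :=
  \sum_(x : option V)
    c x *: (match x with None => dV None | Some v => qv (sqAV Y) v end).
Lemma phi0f_lin Y : linear (phi0f Y).
Proof.
move=> a x y; rewrite /phi0f scaler_sumr -big_split /=; apply: eq_bigr => e _.
by rewrite !ffunE scalerDl scalerA.
Qed.
HB.instance Definition _ Y := GRing.isLinear.Build _ _ _ _ (phi0f Y) (phi0f_lin Y).
Lemma phi0E Y c : phi0 Y c = phi0f Y c.
Proof. exact: (lfunE (phi0f Y)). Qed.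

Definition phi1f (Y : sq g) (c : CE g) : CE g :=
  [ffun e => if e \in sqAE Y then 0 else c e].
Lemma phi1f_lin Y : linear (phi1f Y).
Proof.
move=> a x y; apply/ffunP => e; rewrite !ffunE.
by case: (e \in sqAE Y); rewrite ?scaler0 ?addr0.
Qed.
HB.instance Definition _ Y := GRing.isLinear.Build _ _ _ _ (phi1f Y) (phi1f_lin Y).
Lemma phi1E Y c : phi1 Y c = phi1f Y c.
Proof. exact: (lfunE (phi1f Y)). Qed.

Lemma sum_delta (T : finType) (x : T) (F : T -> CV g) :
  \sum_(y : T) (mv (pt x) y) *: F y = F x.
Proof.
rewrite (bigD1 x) //= big1 ?addr0 => [|y Hy]; first by rewrite ffunE /pt eqxx scale1r.
by rewrite ffunE /pt (negbTE Hy) scale0r.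
Qed.

Lemma qvE (A : {set V}) (Av : V -> bool) v : (forall v, (v \in A) = Av v) -> qv A v = mv (pt (qvm Av v)).
Proof. by move=> HA; rewrite /qv /qvm HA; case: (Av v). Qed.

Lemma bd_gen (A : {set V}) (Av : V -> bool) e : (forall v, (v \in A) = Av v) ->
  bd A (mv (pt e)) = mv (bdm Av e).
Proof.
move=> HA; rewrite bdE /bdf sum_delta /bdm mvD.
by rewrite !(qvE _ HA).
Qed.

Lemma phi0_gen Y Av x : (forall v, (v \in sqAV Y) = Av v) ->
  phi0 Y (mv (pt x)) = mv (pt (ph0 Av x)).
Proof.
move=> HA; rewrite phi0E /phi0f sum_delta.
by case: x => [v|] //=; rewrite (qvE _ HA).
Qed.

Lemma mem_el1 m e : (e \in el1 m) = mSE m e && ~~ mAE m e.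
Proof. by rewrite mem_filter El_all andbT. Qed.

Lemma C1E X m : srel X m -> C1 X = <<map mv (map pt (el1 m))>>%VS.
Proof.
case=> _ HSE _ HAE; rewrite /C1; apply: eq_span => c.
rewrite -map_comp; apply/imageP/mapP => [[e]|[e He ->]].
  rewrite !inE HSE HAE => He ->.
  by exists e => //; rewrite mem_el1 andbC.
by exists e => //; rewrite !inE HSE HAE andbC -mem_el1.
Qed.

Lemma C0E X m : srel X m -> C0 X = <<map mv (map pt (pts0 m))>>%VS.
Proof.
case=> HSV _ HAV _; rewrite /C0 /pts0 !map_cat span_cat; congr (_ + _)%VS.
  apply: eq_span => c; rewrite -map_comp.
  apply/imageP/mapP => [[v]|[x /mapP [v Hv ->] ->]].
    rewrite !inE HSV HAV andbC => Hv ->.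
    exists (Some v) => //.
    by apply/mapP; exists v => //; rewrite mem_filter Hv Vl_all.
  by exists v => //; rewrite !inE HSV HAV; move: Hv; rewrite mem_filter => /andP [/andP [-> ->] _].
have -> : (sqAV X != set0) = has (mAV m) Vl.
  apply/set0Pn/hasP => [[v Hv]|[v _ Hv]]; exists v => //; by rewrite ?HAV // -HAV.
by case: has => /=; rewrite ?span_nil ?span_seq1.
Qed.

Lemma map_bd (A : {set V}) (Av : V -> bool) l : (forall v, (v \in A) = Av v) ->
  map (bd A) (map mv (map pt l)) = map mv (map (bdm Av) l).
Proof. by move=> HA; elim: l => //= e l ->; rewrite (bd_gen _ HA). Qed.

Lemma map_phi0 Y Av l : (forall v, (v \in sqAV Y) = Av v) ->
  map (phi0 Y) (map mv (map pt l)) = map mv [seq pt (ph0 Av x) | x <- l].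
Proof. by move=> HA; elim: l => //= e l ->; rewrite (phi0_gen _ HA). Qed.

Lemma hrank0E X Y mX mY : srel X mX -> srel Y mY -> hrank 0 X Y = hcomp 0 mX mY.
Proof.
move=> HX HY; have [_ _ HAV _] := HY.
rewrite /hrank /hcomp /hr0 /B0 (C0E HX) (C1E HY) !limg_span.
rewrite (map_phi0 _ HAV) (map_bd _ HAV) -span_cat -map_cat.
by rewrite !(rkP Tl0_all).
Qed.

Lemma C1ker X Y mX mY : srel X mX -> srel Y mY ->
  (C1 X :&: lker (phi1 Y))%VS =
  <<map mv (map pt [seq e <- el1 mX | mAE mY e])>>%VS.
Proof.
move=> HX [_ _ _ HAE]; apply/vspaceP => c.
rewrite memv_cap memv_ker (C1E HX); apply/andP/idP.
  case=> /span_deltaP H1 /eqP H2; apply/span_deltaP => e.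
  rewrite mem_filter negb_and => /orP [He|He]; last exact: H1.
  have := congr1 (fun f : CE g => f e) H2; rewrite phi1E /phi1f !ffunE HAE.
  by rewrite (negbTE He).
move=> Hc; have H := elimT (span_deltaP _ _) Hc; split; first apply/span_deltaP.
  by move=> e He; apply: H; rewrite mem_filter (negbTE He) andbF.
apply/eqP/ffunP => e; rewrite phi1E /phi1f !ffunE HAE.
case: ifP => // He; apply: H; by rewrite mem_filter He.
Qed.

Lemma dim_ker_bd (A : {set V}) (Av : V -> bool) l : (forall v, (v \in A) = Av v) ->
  \dim (<<map mv (map pt l)>> :&: lker (bd A))%VS =
  (rk El (map pt l) - rk Tl0 (map (bdm Av) l))%N.
Proof.
move=> HA; have := limg_ker_dim (bd A) <<map mv (map pt l)>>.
rewrite limg_span (map_bd _ HA) -map_comp !(rkP Tl0_all).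
rewrite map_comp (rkP El_all) => <-; by rewrite addnK.
Qed.

Lemma hrank1E X Y mX mY : srel X mX -> srel Y mY -> hrank 1 X Y = hcomp 1 mX mY.
Proof.
move=> HX HY; have [_ _ HAV _] := HX.
rewrite /hrank /hcomp /hr1 /Z1.
have := limg_ker_dim (phi1 Y) (C1 X :&: lker (bd (sqAV X))).
rewrite -capvA [(lker _ :&: _)%VS]capvC capvA (C1ker HX HY) (dim_ker_bd _ HAV) (C1E HX) (dim_ker_bd _ HAV).
move=> <-; by rewrite addKn.
Qed.

Lemma hrankE k X Y mX mY : srel X mX -> srel Y mY -> hrank k X Y = hcomp k mX mY.
Proof.
case: k => [|[|k]] HX HY; [exact: hrank0E | exact: hrank1E | by []].
Qed.
End GraphModel.

Lemma dgm_ext N (r1 r2 : nat -> nat -> nat) :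
  (forall i j, (i <= j)%N -> (j <= N)%N -> r1 i j = r2 i j) ->
  dgm_of_ranks N r1 = dgm_of_ranks N r2.
Proof.
move=> H; apply: functional_extensionality => b.
apply: functional_extensionality => [[d|]] /=.
  case: ifP => // /andP [Hbd HdN].
  by rewrite !H //; lia.
case: ifP => // HbN; rewrite !H //; lia.
Qed.

Section Recover.
Variables (D : diagram) (N : nat).
Definition rrow (prev : nat -> int) (b : nat) : nat -> int :=
  fix f m := match m with
  | 0 => D b None + prev 0%N
  | m'.+1 => D b (Some (N - m')%N) + prev m + f m' - prev m'
  end.
Fixpoint rr (b : nat) : nat -> int :=
  match b with
  | 0 => rrow (fun _ => 0) 0
  | b'.+1 => rrow (rr b') b
  end.
End Recover.

Lemma rrP N (r : nat -> nat -> nat) b m :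
  (b + m <= N)%N -> rr (dgm_of_ranks N r) N b m = (r b (N - m)%N)%:Z.
Proof.
elim: b m => [|b IHb] m.
  elim: m => [|m IHm] H /=.
    by rewrite subn0 subr0 addr0.
  move: IHm => /= IHm; rewrite IHm; last by lia.
  have -> : ((0 < N - m <= N)%N) by apply/andP; split; lia.
  have -> : (N - m).-1 = (N - m.+1)%N by lia.
  lia.
elim: m => [|m IHm] H /=.
  rewrite -/(rr _ _ b) IHb; last by lia.
  rewrite subn0 (_ : (b.+1 <= N)%N) /=; last by lia.
  lia.
move: IHm => /= IHm; rewrite IHm; last by lia.
rewrite !IHb; try lia.
have -> : ((b.+1 < N - m <= N)%N) by apply/andP; split; lia.
have -> : (N - m).-1 = (N - m.+1)%N by lia.
lia.
Qed.

Definition recov (D : diagram) (N i j : nat) : nat := absz (rr D N i (N - j)%N).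

Lemma recovP N r i j : (i <= j)%N -> (j <= N)%N ->
  recov (dgm_of_ranks N r) N i j = r i j.
Proof. by move=> Hij HjN; rewrite /recov rrP ?subKn //; lia. Qed.

Section FVals.
Variables (R : realType) (g : graph) (f : filtration R g).

Lemma mem_fvals_v v : fv f v \in fvals f.
Proof. by rewrite /fvals mem_sort mem_undup mem_cat map_f ?mem_enum. Qed.
Lemma mem_fvals_e e : fe f e \in fvals f.
Proof. by rewrite /fvals mem_sort mem_undup mem_cat orbC map_f ?mem_enum. Qed.

Lemma nlev0_V : nlev f = 0%N -> gV g -> False.
Proof.
move=> H v; have := mem_fvals_v v; move/eqP: H; rewrite /nlev size_eq0 => /eqP ->.
by [].
Qed.

Lemma all_sq_eq (X Y : sq g) : nlev f = 0%N -> X = Y.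
Proof.
move=> H; have HV := nlev0_V H.
have HE : gE g -> False by move=> e; exact: HV (gsrc e).
case: X Y => [a b c d] [a' b' c' d'].
have eV (A B : {set gV g}) : A = B by apply/setP => v; case: (HV v).
have eE (A B : {set gE g}) : A = B by apply/setP => v; case: (HE v).
by rewrite (eV a a') (eE b b') (eV c c') (eE d d').
Qed.

Lemma fvals_sorted : sorted <=%O (fvals f).
Proof. exact: (sort_sorted le_total). Qed.

Lemma lev_max x : x \in fvals f -> x <= lev f (nlev f).-1.
Proof.
move=> Hx; rewrite /lev -(nth_index 0 Hx).
have Hi : (index x (fvals f) < size (fvals f))%N by rewrite index_mem.
apply: (sorted_leq_nth le_trans lexx 0 fvals_sorted); rewrite ?inE /nlev.
- exact: Hi.
- move: Hi; case: (size (fvals f)) => //.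
- move: Hi; case: (size (fvals f)) => //.
Qed.

Lemma Gsub_last : (0 < nlev f)%N -> Gsub f (nlev f).-1 = Zq f 0.
Proof.
move=> Hn; rewrite /Gsub /Zq subn0 !big_geq //; congr SQ.
  by apply/setP => v; rewrite !inE lev_max ?mem_fvals_v.
by apply/setP => v; rewrite !inE lev_max ?mem_fvals_e.
Qed.

Lemma fb_fwd i : (i < nlev f)%N -> fb_seq f i = Gsub f i.
Proof. by rewrite /fb_seq => ->. Qed.
Lemma fb_bwd i : (0 < nlev f)%N -> (i <= nlev f)%N ->
  fb_seq f ((nlev f).-1 + i) = Zq f i.
Proof.
move=> Hn Hi; rewrite /fb_seq; case: i Hi => [|i] Hi.
  by rewrite addn0 (ltn_predL (nlev f)) Hn Gsub_last.
have -> : ((nlev f).-1 + i.+1 < nlev f)%N = false.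
  by move: Hn; case: (nlev f) => // n _ /=; rewrite addnS ltnS ltnNge leq_addr.
congr Zq; move: Hn; case: (nlev f) => // n _ /=.
by rewrite addnS subSS addKn.
Qed.
End FVals.

Definition Phi (n : nat) (DD : nat -> diagram) (k : nat) : diagram :=
  dgm_of_ranks n.-1 (fun i j => recov (DD k) (n + n).-1 i j).
Definition Psi (n : nat) (DD : nat -> diagram) (k : nat) : diagram :=
  dgm_of_ranks n (fun i j => recov (DD k) (n + n).-1 (n.-1 + i) (n.-1 + j)).



Lemma PhiP (R : realType) (g : graph) (f : filtration R g) k :
  fwd_dgm f k = Phi (nlev f) (fb_dgm f) k.
Proof.
rewrite /fwd_dgm /Phi /fb_dgm /pdgm; apply: dgm_ext => i j Hij HjN.
have Hn2 : (j <= (nlev f + nlev f).-1)%N.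
  by apply: leq_trans HjN _; case: (nlev f) => //= n; rewrite leq_addr.
rewrite recovP; [|exact: Hij|exact: Hn2].
case: (posnP (nlev f)) => Hn.
  by rewrite (all_sq_eq (fb_seq f i) (fwd_seq f i) Hn) (all_sq_eq (fb_seq f j) (fwd_seq f j) Hn).
have Hj : (j < nlev f)%N by move: HjN Hn; case: (nlev f).
rewrite (fb_fwd (leq_ltn_trans Hij Hj)) (fb_fwd Hj).
reflexivity.
Qed.

Lemma PsiP (R : realType) (g : graph) (f : filtration R g) k :
  bwd_dgm f k = Psi (nlev f) (fb_dgm f) k.
Proof.
rewrite /bwd_dgm /Psi /fb_dgm /pdgm; apply: dgm_ext => i j Hij HjN.
have Hn2 : ((nlev f).-1 + j <= (nlev f + nlev f).-1)%N.
  by move: HjN; case: (nlev f) => [|n] /=; [rewrite leqn0 => /eqP -> | rewrite leq_add2l].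
rewrite recovP; [|by rewrite leq_add2l|exact: Hn2].
case: (posnP (nlev f)) => Hn.
  by rewrite (all_sq_eq (fb_seq f _) (bwd_seq f i) Hn) (all_sq_eq (fb_seq f _) (bwd_seq f j) Hn).
rewrite (fb_bwd Hn (leq_trans Hij HjN)) (fb_bwd Hn HjN).
reflexivity.
Qed.

Definition om (m k : nat) : 'I_m.+1 := Ordinal (ltn_pmod k (ltn0Sn m)).
Definition srcG (e : 'I_5) : 'I_4 := om 3 (nth 0%N [:: 0; 0; 0; 1; 2]%N e).
Definition tgtG (e : 'I_5) : 'I_4 := om 3 (nth 0%N [:: 1; 2; 3; 2; 3]%N e).
Definition srcH (e : 'I_5) : 'I_4 := om 3 (nth 0%N [:: 0; 0; 1; 1; 2]%N e).
Definition tgtH (e : 'I_5) : 'I_4 := om 3 (nth 0%N [:: 2; 3; 1; 2; 3]%N e).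
Definition gG : graph := Graph srcG tgtG.
Definition gH : graph := Graph srcH tgtH.
Definition cG : coloring gG := fun v => nth 0%N [:: 1; 2; 0; 0]%N v.
Definition cH : coloring gH := fun v => nth 0%N [:: 2; 1; 0; 0]%N v.

Definition cmax (g : graph) (c : coloring g) (e : gE g) : nat := maxn (c (gsrc e)) (c (gtgt e)).
Definition mG (g : graph) (c : coloring g) (i : nat) : msq g :=
  MSQ (fun v => (c v <= i)%N) (fun e => (cmax c e <= i)%N) (fun _ => false) (fun _ => false).
Definition icv (g : graph) (El : seq (gE g)) (c : coloring g) (i : nat) (v : gV g) : bool :=
  (c v == i) || has (fun e => (cmax c e == i) && ((gsrc e == v) || (gtgt e == v))) El.
Definition mZ (g : graph) (El : seq (gE g)) (c : coloring g) (n j : nat) : msq g :=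
  MSQ (fun _ => true) (fun _ => true)
    (fun v => has (fun i => icv El c i v) (iota (n - j) j))
    (fun e => has (fun i => cmax c e == i) (iota (n - j) j)).
Definition mFB (g : graph) (El : seq (gE g)) (c : coloring g) (n p : nat) : msq g :=
  if (p < n)%N then mG c p else mZ El c n (p - n).+1.


Lemma mem_bigcup_seq (T : finType) (r : seq nat) (F : nat -> {set T}) x :
  (x \in \bigcup_(i <- r) F i) = has (fun i => x \in F i) r.
Proof. elim: r => [|a r IH]; by rewrite ?big_nil ?big_cons ?inE // IH. Qed.

Lemma Frule_mono (R : realType) (g : graph) (c : coloring g) (e : gE g) :
  ((c (gsrc e))%:R <= (cmax c e)%:R :> R) /\ ((c (gtgt e))%:R <= (cmax c e)%:R :> R).
Proof. by rewrite !ler_nat leq_maxl leq_maxr. Qed.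

Definition Frule (R : realType) : filt_rule R :=
  fun g c => @Filtration R g (fun v => (c v)%:R) (fun e => (cmax c e)%:R) (@Frule_mono R g c).

Lemma Frule_equiv (R : realType) : perm_equivariant (Frule R).
Proof.
move=> g h cg ch pV pE [_ [_ [Hc He]]]; split => [v|e] /=; first by rewrite Hc.
rewrite /cmax; case: (He e) => [[-> ->]|[-> ->]]; by rewrite !Hc // maxnC.
Qed.

Section Concrete.
Variables (R : realType) (g : graph) (c : coloring g).
Variables (Vl : seq (gV g)) (El : seq (gE g)) (n : nat).
Hypotheses (Vl_all : forall v, v \in Vl) (El_all : forall e, e \in El).
Hypothesis Hvals : all (fun x => x < n)%N (map c Vl ++ map (cmax c) El) &&
                   all (fun i => i \in map c Vl ++ map (cmax c) El) (iota 0 n).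
Local Notation f := (Frule R c).

Lemma fvalsE : fvals f = map (fun i => i%:R) (iota 0 n).
Proof.
have natr_inj : injective (fun i : nat => (i%:R : R)).
  by move=> a b /eqP; rewrite eqr_nat => /eqP.
have Hmem : forall x, (x \in map c (enum (gV g)) ++ map (cmax c) (enum (gE g))) = (x < n)%N.
  move: Hvals => /andP [/allP H1 /allP H2] x.
  have -> : (x \in map c (enum (gV g)) ++ map (cmax c) (enum (gE g))) =
            (x \in map c Vl ++ map (cmax c) El).
    rewrite !mem_cat; congr orb; apply/mapP/mapP => [[v _ ->]|[v _ ->]];
      by exists v; rewrite ?mem_enum ?Vl_all ?El_all.
  apply/idP/idP => [/H1 //|Hx]; apply: H2; by rewrite mem_iota.
apply: (sorted_eq (@le_trans _ R) (@le_anti _ R)).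
- exact: (sort_sorted le_total).
- rewrite sorted_map; apply: sub_sorted (iota_sorted 0 n) => a b /=.
  by rewrite ler_nat.
rewrite /fvals perm_sort.
apply: uniq_perm.
- exact: undup_uniq.
- by rewrite (map_inj_uniq natr_inj) iota_uniq.
move=> x; rewrite mem_undup.
have -> : [seq fv f v | v <- enum (gV g)] ++ [seq fe f e | e <- enum (gE g)] =
          map (fun i => i%:R) (map c (enum (gV g)) ++ map (cmax c) (enum (gE g))).
  by rewrite map_cat -!map_comp.
apply: eq_mem_map => y; by rewrite Hmem mem_iota.
Qed.

Lemma nlevE : nlev f = n.
Proof. by rewrite /nlev fvalsE size_map size_iota. Qed.

Lemma levE i : (i < n)%N -> lev f i = i%:R.
Proof. by move=> Hi; rewrite /lev fvalsE (nth_map 0%N) ?size_iota // nth_iota. Qed.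

Lemma srel_G i : (i < n)%N -> srel (Gsub f i) (mG c i).
Proof.
move=> Hi; split => [v|e|v|e]; rewrite /= ?inE ?levE //= ?ler_nat //.
Qed.

Lemma srel_Z j : (j <= n)%N -> srel (Zq f j) (mZ El c n j).
Proof.
move=> Hj; split => [v|e|v|e]; rewrite /= ?inE // ?nlevE.
- rewrite mem_bigcup_seq /index_iota subKn //; apply: eq_in_has => i.
  rewrite mem_iota => /andP [_ Hi]; have {Hi} Hi : (i < n)%N by rewrite subnK in Hi.
  rewrite /ICV /icv !inE levE // eqr_nat -orbA; congr orb.
  apply/orP/hasP => [[/imsetP [e He ->]|/imsetP [e He ->]]|[e _ /andP [He Hv]]].
  + exists e; rewrite ?El_all //; move: He; rewrite !inE levE // eqr_nat => ->.
    by rewrite eqxx.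
  + exists e; rewrite ?El_all //; move: He; rewrite !inE levE // eqr_nat => ->.
    by rewrite eqxx orbT.
  + have HeI : e \in ICE f i by rewrite !inE levE // eqr_nat.
    case/orP: Hv => /eqP <-; [left|right]; exact: imset_f.
- rewrite mem_bigcup_seq /index_iota subKn //; apply: eq_in_has => i.
  rewrite mem_iota => /andP [_ Hi]; have {Hi} Hi : (i < n)%N by rewrite subnK in Hi.
  by rewrite !inE levE // eqr_nat.
Qed.

Hypothesis npos : (0 < n)%N.

Lemma srel_FB p : (p <= (n + n).-1)%N -> srel (fb_seq f p) (mFB El c n p).
Proof.
move=> Hp; rewrite /fb_seq /mFB nlevE; case: ifP => Hpn; first exact: srel_G.
apply: srel_Z; move/negbT: Hpn; rewrite -leqNgt => Hpn.
move: npos => Hn; lia.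
Qed.


Lemma fwd_model k :
  fwd_dgm f k = dgm_of_ranks n.-1 (fun i j => hcomp Vl El k (mG c i) (mG c j)).
Proof.
rewrite /fwd_dgm /pdgm nlevE; apply: dgm_ext => i j Hij Hj.
have Hjn : (j < n)%N by rewrite -(prednK npos) ltnS.
apply: hrankE => //; apply: srel_G => //; exact: leq_ltn_trans Hij Hjn.
Qed.

Lemma bwd_model k :
  bwd_dgm f k = dgm_of_ranks n (fun i j => hcomp Vl El k (mZ El c n i) (mZ El c n j)).
Proof.
rewrite /bwd_dgm /pdgm nlevE; apply: dgm_ext => i j Hij Hj.
apply: hrankE => //; apply: srel_Z => //; exact: leq_trans Hij Hj.
Qed.

Lemma fb_model k :
  fb_dgm f k = dgm_of_ranks (n + n).-1
                 (fun i j => hcomp Vl El k (mFB El c n i) (mFB El c n j)).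
Proof.
rewrite /fb_dgm /pdgm nlevE; apply: dgm_ext => i j Hij Hj.
apply: hrankE => //; apply: srel_FB => //; exact: leq_trans Hij Hj.
Qed.
End Concrete.

Definition V4 : seq 'I_4 := map (om 3) (iota 0 4).
Definition E5 : seq 'I_5 := map (om 4) (iota 0 5).

Lemma V4_all (v : gV gG) : v \in (V4 : seq (gV gG)).
Proof.
apply/mapP; exists (val v); first by rewrite mem_iota /= ltn_ord.
by apply: val_inj; rewrite /= modn_small.
Qed.
Lemma E5_all (e : gE gG) : e \in (E5 : seq (gE gG)).
Proof.
apply/mapP; exists (val e); first by rewrite mem_iota /= ltn_ord.
by apply: val_inj; rewrite /= modn_small.
Qed.
Lemma V4_allH (v : gV gH) : v \in (V4 : seq (gV gH)).
Proof. exact: V4_all. Qed.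
Lemma E5_allH (e : gE gH) : e \in (E5 : seq (gE gH)).
Proof. exact: E5_all. Qed.

Lemma HvG : all (fun x => x < 3)%N (map cG V4 ++ map (cmax cG) E5) &&
            all (fun i => i \in map cG V4 ++ map (cmax cG) E5) (iota 0 3).
Proof. by vm_compute. Qed.
Lemma HvH : all (fun x => x < 3)%N (map cH V4 ++ map (cmax cH) E5) &&
            all (fun i => i \in map cH V4 ++ map (cmax cH) E5) (iota 0 3).
Proof. by vm_compute. Qed.

Lemma checkF : all (fun k => all (fun i => all (fun j =>
    @hcomp gG V4 E5 k (mG cG i) (mG cG j) == @hcomp gH V4 E5 k (mG cH i) (mG cH j))
    (iota 0 3)) (iota 0 3)) [:: 0; 1]%N.
Proof. by vm_compute. Qed.
Lemma checkB : all (fun k => all (fun i => all (fun j =>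
    @hcomp gG V4 E5 k (@mZ gG E5 cG 3 i) (@mZ gG E5 cG 3 j) ==
    @hcomp gH V4 E5 k (@mZ gH E5 cH 3 i) (@mZ gH E5 cH 3 j))
    (iota 0 4)) (iota 0 4)) [:: 0; 1]%N.
Proof. by vm_compute. Qed.

Definition dG (b : nat) (d : option nat) : int :=
  dgm_of_ranks 5 (fun i j => @hcomp gG V4 E5 1 (@mFB gG E5 cG 3 i) (@mFB gG E5 cG 3 j)) b d.
Definition dH (b : nat) (d : option nat) : int :=
  dgm_of_ranks 5 (fun i j => @hcomp gH V4 E5 1 (@mFB gH E5 cH 3 i) (@mFB gH E5 cH 3 j)) b d.

Lemma part3 (R : realType) :
  exists (g h : graph) (cg : coloring g) (ch : coloring h) (F : filt_rule R),
     perm_equivariant F /\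
     (forall k, fwd_dgm (F g cg) k = fwd_dgm (F h ch) k) /\
     (forall k, bwd_dgm (F g cg) k = bwd_dgm (F h ch) k) /\
     (exists k, fb_dgm (F g cg) k <> fb_dgm (F h ch) k).
Proof.
exists gG, gH, cG, cH, (Frule R); split; first exact: Frule_equiv.
split.
  move=> k.
  rewrite (@fwd_model R gG cG V4 E5 3 V4_all E5_all HvG isT k).
  rewrite (@fwd_model R gH cH V4 E5 3 V4_allH E5_allH HvH isT k).
  apply: dgm_ext => i j Hij Hj.
  have Hj3 : (j < 3)%N by apply: Hj.
  have Hi3 : (i < 3)%N by apply: leq_ltn_trans Hij Hj3.
  case: k => [|[|k]]; last reflexivity.
    have /andP [H0 _] := checkF.
    move/allP: H0 => /(_ i); rewrite mem_iota add0n Hi3 => /(_ isT).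
    by move/allP => /(_ j); rewrite mem_iota add0n Hj3 => /(_ isT) /eqP.
  have /andP [_ /andP [H0 _]] := checkF.
  move/allP: H0 => /(_ i); rewrite mem_iota add0n Hi3 => /(_ isT).
  by move/allP => /(_ j); rewrite mem_iota add0n Hj3 => /(_ isT) /eqP.
split.
  move=> k.
  rewrite (@bwd_model R gG cG V4 E5 3 V4_all E5_all HvG k).
  rewrite (@bwd_model R gH cH V4 E5 3 V4_allH E5_allH HvH k).
  apply: dgm_ext => i j Hij Hj.
  have Hj3 : (j < 4)%N by apply: Hj.
  have Hi3 : (i < 4)%N by apply: leq_ltn_trans Hij Hj3.
  case: k => [|[|k]]; last reflexivity.
    have /andP [H0 _] := checkB.
    move/allP: H0 => /(_ i); rewrite mem_iota add0n Hi3 => /(_ isT).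
    by move/allP => /(_ j); rewrite mem_iota add0n Hj3 => /(_ isT) /eqP.
  have /andP [_ /andP [H0 _]] := checkB.
  move/allP: H0 => /(_ i); rewrite mem_iota add0n Hi3 => /(_ isT).
  by move/allP => /(_ j); rewrite mem_iota add0n Hj3 => /(_ isT) /eqP.
exists 1%N.
rewrite (@fb_model R gG cG V4 E5 3 V4_all E5_all HvG isT 1).
rewrite (@fb_model R gH cH V4 E5 3 V4_allH E5_allH HvH isT 1).
move=> Heq; have := congr1 (fun D : diagram => D 1%N (Some 4%N)) Heq.
vm_compute; intro E; discriminate E.
Qed.

Local Close Scope ring_scope.

Theorem theorem1 (R : realType) :
  (* forward and backward diagrams are determined by the FB diagrams
     (given the number n+1 of distinct filtration values) *)
  (exists Phi : nat -> (nat -> diagram) -> nat -> diagram,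
     forall (g : graph) (f : filtration R g) (k : nat),
       fwd_dgm f k = Phi (nlev f) (fb_dgm f) k) /\
  (exists Psi : nat -> (nat -> diagram) -> nat -> diagram,
     forall (g : graph) (f : filtration R g) (k : nat),
       bwd_dgm f k = Psi (nlev f) (fb_dgm f) k) /\
  (* FB is strictly more expressive than forward + backward *)
  (exists (g h : graph) (cg : coloring g) (ch : coloring h) (F : filt_rule R),
     perm_equivariant F /\
     (forall k, fwd_dgm (F g cg) k = fwd_dgm (F h ch) k) /\
     (forall k, bwd_dgm (F g cg) k = bwd_dgm (F h ch) k) /\
     (exists k, fb_dgm (F g cg) k <> fb_dgm (F h ch) k)).
Proof.
split; first by exists Phi => g f k; exact: PhiP.
split; first by exists Psi => g f k; exact: PsiP.
exact: part3.
Qed.
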